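(* Let $G$ be a Nash equilibrium graph of the sum network creation game with $n$ players and $H\subseteq G$ a non-trivial $2$-edge-connected component, with $g(G)>14$. Then every $2$-path $\pi=u_0-u_1-\dots-u_k$ in $H$ with $k\ge 5$, oriented so that each $u_i$ ($0\le i<k$) has bought the link $(u_i,u_{i+1})$, satisfies $$D(u_5)-D(u_0)\ge 2n-(U_1+U_2+U_3+U_4).$$
   Context: Sum network creation game: players $V=\{1,\dots,n\}$, parameter $\alpha>0$; a strategy of $u$ is $s_u\subseteq V\setminus\{u\}$; $G_s$ has an edge $uv$ whenever $v\in s_u$ or $u\in s_v$, regarded as a digraph with arc $(u,v)$ when $v\in s_u$; the cost of $u$ is $\alpha|s_u|+\sum_{v\ne u}d_{G_s}(u,v)$. A Nash equilibrium graph is $G_s$ for $s$ from which no player can strictly lower his cost unilaterally. $D(u)=\sum_{v\ne u}d_G(u,v)$. A $2$-edge-connected component $H$ is a maximal bridgeless subgraph; non-trivial means at least $3$ vertices. For $u\in V(H)$, $T(u)$ is the connected component containing $u$ of the subgraph induced by $(V(G)\setminus V(H))\cup\{u\}$, and $U_i=|T(u_i)|$. A $2$-path in $H$ is a path $u_0-\dots-u_k$ in $H$ with $deg^-_H(u_i)=deg^+_H(u_i)=1$ for $0<i<k$ (degrees counted over arcs inside $H$). $g(G)$ denotes the girth of $G$. *)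

(* Defs.v *)
From mathcomp Require Import all_boot all_order all_algebra.
Set Implicit Arguments. Unset Strict Implicit. Unset Printing Implicit Defensive.
Import Order.TTheory GRing.Theory Num.Theory.

Section NCG.
Variable V : finType.

(* A strategy profile: s u is the set of vertices u buys links to. *)
Definition profile := {ffun V -> {set V}}.

Definition edge (s : profile) : rel V := fun x y => (y \in s x) || (x \in s y).

Definition ball (e : rel V) (k : nat) (u : V) : {set V} :=
  iter k (fun A => A :|: [set y | [exists x in A, e x y]]) [set u].

(* graph distance (least k with v in ball k u); only used when v is reachable *)
Definition dist (e : rel V) (u v : V) : nat :=
  find (fun k => v \in ball e k u) (iota 0 #|V|).

Definition Dsum (e : rel V) (u : V) : nat := \sum_(v | v != u) dist e u v.

Definition reaches_all (e : rel V) (u : V) : bool := [forall v, connect e u v].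

Definition cost (R : realFieldType) (alpha : R) (s : profile) (u : V) : R :=
  alpha * #|s u|%:R + (Dsum (edge s) u)%:R.

Definition upd (s : profile) (u : V) (t : {set V}) : profile :=
  [ffun w => if w == u then t else s w].

(* Nash equilibrium; cost is +infinity when u does not reach every vertex. *)
Definition nash (R : realFieldType) (alpha : R) (s : profile) : Prop :=
  (forall u, u \notin s u) /\
  forall (u : V) (t : {set V}), u \notin t ->
    reaches_all (edge (upd s u t)) u ->
    reaches_all (edge s) u /\ (cost alpha s u <= cost alpha (upd s u t) u)%R.

Definition remove_edge (e : rel V) (x y : V) : rel V :=
  fun a b => e a b && ~~ (((a == x) && (b == y)) || ((a == y) && (b == x))).

Definition nonbridge (e : rel V) : rel V :=
  fun x y => e x y && connect (remove_edge e x y) x y.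

Definition two_ecc (e : rel V) (H : {set V}) : Prop :=
  exists w, H = [set v | connect (nonbridge e) w v].

Definition restrict (e : rel V) (S : {set V}) : rel V :=
  fun x y => [&& e x y, x \in S & y \in S].

Definition Tset (e : rel V) (H : {set V}) (u : V) : {set V} :=
  [set v | connect (restrict e (~: H :|: [set u])) u v].

Definition outdegH (s : profile) (H : {set V}) (u : V) : nat := #|s u :&: H|.
Definition indegH (s : profile) (H : {set V}) (u : V) : nat :=
  #|[set v in H | u \in s v]|.

Definition girth_gt (e : rel V) (m : nat) : Prop :=
  forall L, 3 <= L <= m ->
    ~ exists c : seq V, [/\ size c = L, uniq c & cycle e c].

End NCG.

(* Main.v *)
Require Import Defs.
From mathcomp Require Import all_boot all_order all_algebra.
From mathcomp Require Import zify.
Import Order.TTheory GRing.Theory Num.Theory.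

Set Implicit Arguments. Unset Strict Implicit. Unset Printing Implicit Defensive.

Section Dist.
Variable V : finType.
Implicit Types (e : rel V) (u v w x y : V).

Lemma ballS e k u : ball e k.+1 u = ball e k u :|: [set y | [exists x in ball e k u, e x y]].
Proof. by []. Qed.

Lemma ball0 e u : ball e 0 u = [set u].
Proof. by []. Qed.

Lemma ball_step e k u w x : w \in ball e k u -> e w x -> x \in ball e k.+1 u.
Proof.
move=> Hw Hwx; rewrite ballS inE; apply/orP; right; rewrite inE.
by apply/existsP; exists w; rewrite Hw Hwx.
Qed.

Lemma ball_sub e k u : ball e k u \subset ball e k.+1 u.
Proof. by rewrite ballS subsetUl. Qed.

Lemma ball_mono e k k' u : k <= k' -> ball e k u \subset ball e k' u.
Proof.
move=> H; rewrite -(subnK H); elim: (k' - k) => [|d IH] //=.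
by apply: subset_trans IH (ball_sub _ _ _).
Qed.

Lemma ball_inv e k u x : x \in ball e k.+1 u ->
  x \in ball e k u \/ exists w, w \in ball e k u /\ e w x.
Proof.
rewrite ballS inE => /orP[H|]; first by left.
by rewrite inE => /existsP[w /andP[H1 H2]]; right; exists w.
Qed.

Lemma path_ball e u p : path e u p -> last u p \in ball e (size p) u.
Proof.
elim/last_ind: p => [|p y IH]; first by rewrite /ball /= inE.
rewrite rcons_path last_rcons size_rcons => /andP[/IH H1 H2].
exact: ball_step H1 H2.
Qed.

Lemma connect_ball e u v : connect e u v -> v \in ball e #|V|.-1 u.
Proof.
case/connectP => p Hp ->; case/shortenP: Hp => p' Hp' Hu _.
have Hs : size p' <= #|V|.-1.
  move/card_uniqP: Hu => Hu.
  have := max_card (mem (u :: p')); rewrite Hu /=.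
  by case: #|V|.
exact: subsetP (ball_mono _ _ Hs) _ (path_ball Hp').
Qed.

Lemma dist_le e u v k : v \in ball e k u -> dist e u v <= k.
Proof.
move=> Hv; rewrite /dist; case: (ltnP k #|V|) => Hk.
  rewrite leqNgt; apply/negP => Hlt.
  by have := before_find 0 Hlt; rewrite nth_iota // add0n Hv.
by apply: leq_trans (find_size _ _) _; rewrite size_iota.
Qed.

Lemma dist_ball e u v : connect e u v -> v \in ball e (dist e u v) u.
Proof.
move=> /connect_ball Hv.
have Hn : 0 < #|V| by apply/card_gt0P; exists u.
have Hh : has (fun k => v \in ball e k u) (iota 0 #|V|).
  apply/hasP; exists #|V|.-1 => //; rewrite mem_iota /= add0n.
  by rewrite prednK.
have := nth_find 0 Hh; rewrite nth_iota ?add0n //.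
by move: Hh; rewrite has_find size_iota.
Qed.

Definition conn e := forall u v, connect e u v.

Variable e : rel V.
Hypothesis He : conn e.

Lemma ball_dist k u v : (v \in ball e k u) = (dist e u v <= k).
Proof.
apply/idP/idP; first exact: dist_le.
by move=> H; apply: subsetP (ball_mono _ _ H) _ (dist_ball (He u v)).
Qed.

Lemma dist0 u v : dist e u v = 0 -> u = v.
Proof.
move=> H; have := dist_ball (He u v); rewrite H ball0 inE => /eqP ->. done.
Qed.

Lemma distuu u : dist e u u = 0.
Proof. by apply/eqP; rewrite -leqn0 -ball_dist ball0 inE. Qed.

Lemma dist_edge u w x : e w x -> dist e u x <= (dist e u w).+1.
Proof.
move=> Hwx; rewrite -ball_dist; apply: ball_step Hwx.
by rewrite ball_dist.
Qed.

Lemma dist_pred u x k : dist e u x = k.+1 -> exists w, e w x /\ dist e u w = k.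
Proof.
move=> H; have := dist_ball (He u x); rewrite H => /ball_inv [].
  by rewrite ball_dist H ltnn.
move=> [w [Hw Hwx]]; exists w; split => //.
apply/eqP; rewrite eqn_leq -ball_dist Hw /=.
by have := dist_edge u Hwx; rewrite H ltnS.
Qed.

Lemma dist_tri u w x : dist e u x <= dist e u w + dist e w x.
Proof.
move Hm : (dist e w x) => m; elim: m x Hm => [|m IH] x Hm.
  by rewrite (dist0 Hm) addn0.
have [y [Hyx Hy]] := dist_pred Hm.
apply: leq_trans (dist_edge u Hyx) _.
by rewrite addnS ltnS IH.
Qed.

Hypothesis Hsym : symmetric e.

Lemma dist_sym_le u v : dist e v u <= dist e u v.
Proof.
move Hm : (dist e u v) => m; elim: m v Hm => [|m IH] v Hm.
  by rewrite (dist0 Hm) distuu.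
have [w [Hwv Hw]] := dist_pred Hm.
apply: leq_trans (dist_tri v w u) _.
have : dist e v w <= 1.
  by have := dist_edge v (w := v) (x := w); rewrite distuu Hsym => ->.
by move=> H; rewrite -add1n; apply: leq_add H (IH _ Hw).
Qed.

Lemma dist_sym u v : dist e u v = dist e v u.
Proof. by apply/eqP; rewrite eqn_leq !dist_sym_le. Qed.

End Dist.

Section Cut.
Variable V : finType.
Variable e : rel V.
Hypothesis He : conn e.
Lemma cut_dist (A : {set V}) h :
  (forall a b, e a b -> a \notin A -> b \in A -> b = h) ->
  forall y x, y \notin A -> x \in A -> dist e y h + dist e h x <= dist e y x.
Proof.
move=> HA y x Hy; move Hm : (dist e y x) => m; elim: m x Hm => [|m IH] x Hm Hx.
  by move: Hy; rewrite (dist0 He Hm) Hx.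
case: (eqVneq x h) Hm => [->|Hxh] Hm; first by rewrite (distuu He) addn0 Hm.
have [w [Hwx Hw]] := dist_pred He Hm.
have HwA : w \in A.
  apply/negPn/negP => HwA; by rewrite (HA _ _ Hwx HwA Hx) eqxx in Hxh.
have := IH w Hw HwA; have := dist_edge He h Hwx.
lia.
Qed.
End Cut.

Lemma DsumE (V : finType) (e : rel V) x : conn e -> Dsum e x = \sum_v dist e x v.
Proof. by move=> He; rewrite /Dsum [RHS](bigD1 x) //= distuu // add0n. Qed.

Lemma sum_const_V (V : finType) c : \sum_(x : V) c = #|V| * c.
Proof. by rewrite -sum_nat_const; apply: eq_bigl => x. Qed.

Lemma sum_in (V : finType) (A : {set V}) : \sum_(x : V) (x \in A : nat) = #|A|.
Proof. by rewrite -sum1_card [RHS]big_mkcond; apply: eq_bigr => x _; case: (x \in A). Qed.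

Lemma pv (a0 a1 a2 a3 a4 a5 b0 b1 b2 b3 : nat) (c1 c2 c3 c4 : bool) :
  a0 <= a1.+1 -> a1 <= a0.+1 -> a1 <= a2.+1 -> a2 <= a1.+1 -> a2 <= a3.+1 -> a3 <= a2.+1 ->
  a3 <= a4.+1 -> a4 <= a3.+1 -> a4 <= a5.+1 -> a5 <= a4.+1 ->
  (a0 <= a1 -> b0 <= a0) -> (a2 <= a1 -> b0 <= a2.+1) -> (a1 < a0 -> b0 <= a1.+2) ->
  (a1 <= a2 -> b1 <= a1) -> (a3 <= a2 -> b1 <= a3.+1) -> (a2 < a1 -> b1 <= a2.+2) ->
  (a2 <= a3 -> b2 <= a2) -> (a4 <= a3 -> b2 <= a4.+1) -> (a3 < a2 -> b2 <= a3.+2) ->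
  (a3 <= a4 -> b3 <= a3) -> (a5 <= a4 -> b3 <= a5.+1) -> (a4 < a3 -> b3 <= a4.+2) ->
  (c1 -> (1 + a1 <= a0 /\ 1 + a1 <= a2 /\ 2 + a1 <= a3 /\ 3 + a1 <= a4 /\ 4 + a1 <= a5)) ->
  (c2 -> (2 + a2 <= a0 /\ 1 + a2 <= a1 /\ 1 + a2 <= a3 /\ 2 + a2 <= a4 /\ 3 + a2 <= a5)) ->
  (c3 -> (3 + a3 <= a0 /\ 2 + a3 <= a1 /\ 1 + a3 <= a2 /\ 1 + a3 <= a4 /\ 2 + a3 <= a5)) ->
  (c4 -> (4 + a4 <= a0 /\ 3 + a4 <= a1 /\ 2 + a4 <= a2 /\ 1 + a4 <= a3 /\ 1 + a4 <= a5)) ->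
  (~~ c1 -> a0 < a1 \/ a2 < a1) ->
  (~~ c2 -> a1 < a2 \/ a3 < a2) ->
  (~~ c3 -> a2 < a3 \/ a4 < a3) ->
  (~~ c4 -> a3 < a4 \/ a5 < a4) ->
  b0 + b0 + b1 + b1 + b2 + b2 + b3 + b3 + a0 + 2 <=
  a5 + a0 + a0 + a1 + a1 + a2 + a2 + a3 + a3 + c1 + c2 + c3 + c4.
Proof.
case: c1; case: c2; case: c3; case: c4 => /=; intros;
repeat match goal with H: is_true true -> _ |- _ => specialize (H isT)
 | H : is_true (~~ true) -> _ |- _ => clear H
 | H : is_true (~~ false) -> _ |- _ => specialize (H isT)
 | H : is_true false -> _ |- _ => clear H end; lia.
Qed.

Set Implicit Arguments. Unset Strict Implicit. Unset Printing Implicit Defensive.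

Section Sim.
Variable V : finType.
Variables (e e' : rel V).
Hypothesis He : conn e.
Lemma sim (u : V) (g : V -> nat) (c : nat) :
  (forall w x, e w x -> g x <= (g w).+1) ->
  (forall w x, e w x -> (dist e u w).+1 = dist e u x -> dist e u x + c <= g x -> e' w x) ->
  forall x, dist e u x + c <= g x -> dist e' u x <= dist e u x.
Proof.
move=> Hg He' x Hx; apply: dist_le.
move Hk : (dist e u x) Hx => k; elim: k x Hk => [|k IH] x Hk Hx.
  by rewrite (dist0 He Hk) ball0 inE.
have [w [Hwx Hw]] := dist_pred He Hk.
have Hgw := Hg _ _ Hwx.
apply: (@ball_step _ _ _ _ w).
  by apply: IH Hw _; lia.
by apply: He' => //; rewrite ?Hw ?Hk.
Qed.
End Sim.

Section HS.
Variable V : finType.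
Variable e : rel V.
Hypothesis Hsym : symmetric e.
Variable H : {set V}.
Hypothesis HH : two_ecc e H.

Lemma rem_sym x y : symmetric (remove_edge e x y).
Proof.
move=> a b; rewrite /remove_edge Hsym; congr (_ && ~~ _).
by case: (a == x); case: (b == y); case: (a == y); case: (b == x).
Qed.

Lemma rem_swap x y : remove_edge e x y =2 remove_edge e y x.
Proof.
move=> a b; rewrite /remove_edge; congr (_ && ~~ _).
by case: (a == x); case: (b == y); case: (a == y); case: (b == x).
Qed.

Lemma nb_sym : symmetric (nonbridge e).
Proof.
move=> x y; rewrite /nonbridge Hsym; congr (_ && _).
rewrite (eq_connect (rem_swap x y)).
by rewrite (sym_connect_sym (@rem_sym y x)).
Qed.

Lemma inH_conn a b : a \in H -> b \in H -> connect (nonbridge e) a b.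
Proof.
case: HH => w0 ->; rewrite !inE => Ha Hb.
apply: connect_trans Hb; by rewrite (sym_connect_sym nb_sym).
Qed.

Lemma restr_conn h v : connect (restrict e (~: H :|: [set h])) h v -> v = h \/ v \notin H.
Proof.
case/connectP => p; elim/last_ind: p => [|q y _]; first by move=> _ ->; left.
rewrite rcons_path last_rcons => /andP[_ Hr] ->.
move: Hr; rewrite /restrict => /and3P[_ _]; rewrite !inE => /orP[]; first by right.
by move/eqP ->; left.
Qed.

Lemma T_in_h h : h \in Tset e H h.
Proof. by rewrite inE connect0. Qed.

Lemma T_notH h v : v \in Tset e H h -> v != h -> v \notin H.
Proof. by rewrite inE => /restr_conn [->|//]; rewrite eqxx. Qed.

Lemma T_step h v w : v \in Tset e H h -> e v w -> w \notin H \/ w = h -> w \in Tset e H h.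
Proof.
move=> Hv Hvw Hw; rewrite inE; apply: connect_trans (_ : connect _ h v) _.
  by move: Hv; rewrite inE.
apply: connect1; rewrite /restrict Hvw /=.
have Hv' : v \in ~: H :|: [set h].
  case: (eqVneq v h) => [->|Hne]; first by rewrite !inE eqxx orbT.
  by rewrite !inE (T_notH Hv Hne).
rewrite Hv' /=; case: Hw => [Hw|->]; by rewrite !inE ?Hw ?eqxx ?orbT.
Qed.

Lemma T_cut h v w : h \in H -> v \in Tset e H h -> e v w -> w \notin Tset e H h -> v = h.
Proof.
move=> Hh Hv Hvw Hw; apply/eqP; apply/negPn/negP => Hne.
have HvH := T_notH Hv Hne.
have HwH : w \in H.
  apply/negPn/negP => Hw'; by rewrite (T_step Hv Hvw (or_introl Hw')) in Hw.
have Hwh : w != h.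
  by apply/negP => /eqP Hwh; rewrite (T_step Hv Hvw (or_intror Hwh)) in Hw.
suff Hnb : nonbridge e v w.
  apply/negP: HvH; apply/negPn.
  case: HH => w0 HHd; move: HwH; rewrite HHd !inE => Hw0.
  by apply: connect_trans Hw0 (connect1 _); rewrite nb_sym.
apply/negPn/negP => Hnb.
suff : nonbridge e v w by rewrite (negbTE Hnb).
rewrite /nonbridge Hvw /=.
apply: (@connect_trans _ _ h).
  rewrite (sym_connect_sym (@rem_sym v w)).
  apply: (connect_sub _ (_ : connect (restrict e (~: H :|: [set h])) h v)); last by move: Hv; rewrite inE.
  move=> a b; rewrite /restrict => /and3P[Hab Ha Hb]; apply: connect1.
  rewrite /remove_edge Hab /=.
  have Hwn : w \notin ~: H :|: [set h] by rewrite !inE negb_or negbK HwH.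
  have Hbw : b != w by apply/negP => /eqP Hbw; rewrite -Hbw Hb in Hwn.
  have Haw : a != w by apply/negP => /eqP Haw; rewrite -Haw Ha in Hwn.
  by rewrite (negbTE Hbw) (negbTE Haw) !andbF.
apply: (connect_sub _ (inH_conn Hh HwH)).
move=> a b Hab; apply: connect1.
move: (Hab); rewrite /nonbridge /remove_edge => /andP[Heab _]; rewrite Heab /=.
apply/negP => /orP[] /andP[/eqP Ha /eqP Hb]; move: Hab; rewrite Ha Hb.
  by move=> H'; rewrite H' in Hnb.
by rewrite nb_sym => H'; rewrite H' in Hnb.
Qed.

End HS.

Set Implicit Arguments. Unset Strict Implicit. Unset Printing Implicit Defensive.

Lemma edge_sym (V : finType) (s : profile V) : symmetric (edge s).
Proof. by move=> x y; rewrite /edge orbC. Qed.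

Lemma card1_eq (T : finType) (A : {set T}) a b : #|A| = 1 -> a \in A -> b \in A -> a = b.
Proof. by move/eqP/cards1P => [x ->]; rewrite !inE => /eqP -> /eqP ->. Qed.

Section Main.
Variable V : finType.
Variable s : profile V.
Variable H : {set V}.
Variable k : nat.
Variable u : nat -> V.
Local Notation e := (edge s).
Hypothesis Hconn : conn e.
Hypothesis HH : two_ecc e H.
Hypothesis Hg : girth_gt e 14.
Hypothesis Hk : 5 <= k.
Hypothesis Hinj : forall i j, i <= k -> j <= k -> u i = u j -> i = j.
Hypothesis HuH : forall i, i <= k -> u i \in H.
Hypothesis Hbuy : forall i, i < k -> u i.+1 \in s (u i).
Hypothesis Hdeg : forall i, 0 < i < k -> indegH s H (u i) = 1 /\ outdegH s H (u i) = 1.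

Local Notation d j x := (dist e (u j) x).
Local Notation T m := (Tset e H (u m)).

Lemma e_next i : i < k -> e (u i) (u i.+1).
Proof. by move=> Hi; rewrite /edge Hbuy. Qed.

Lemma e_prev i : i < k -> e (u i.+1) (u i).
Proof. by move=> Hi; rewrite edge_sym e_next. Qed.

Lemma uneq i j : i <= k -> j <= k -> i != j -> u i != u j.
Proof. by move=> Hi Hj Hij; apply/eqP => /(Hinj Hi Hj) /eqP; rewrite (negbTE Hij). Qed.

Lemma nbr j w : 0 < j < k -> e (u j) w -> w \in H -> w = u j.-1 \/ w = u j.+1.
Proof.
move=> Hj Hw HwH; have [Hin Hout] := Hdeg Hj.
case/orP: Hw => Hw.
  right; apply: (card1_eq Hout); rewrite inE ?Hw ?HwH //.
  by rewrite Hbuy ?HuH //; case/andP: Hj.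
left; apply: (card1_eq Hin); rewrite inE ?Hw ?HwH //.
case/andP: Hj => Hj0 Hjk.
rewrite HuH /=; last by apply: leq_trans (leq_pred _) (ltnW Hjk).
have Hjk' : j.-1 < k by rewrite prednK // ltnW.
by have := Hbuy Hjk'; rewrite prednK.
Qed.

Lemma lip j x : j < k -> d j x <= (d j.+1 x).+1 /\ d j.+1 x <= (d j x).+1.
Proof.
move=> Hj; split.
  apply: leq_trans (dist_tri Hconn (u j) (u j.+1) x) _.
  have := dist_edge Hconn (u j) (e_next Hj); rewrite distuu // => H1.
  lia.
apply: leq_trans (dist_tri Hconn (u j.+1) (u j) x) _.
have := dist_edge Hconn (u j.+1) (e_prev Hj); rewrite distuu // => H1.
lia.
Qed.

Lemma uT m j : m <= k -> j <= k -> j != m -> u j \notin T m.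
Proof.
move=> Hm Hj Hjm; apply/negP => HT.
by have := T_notH HT (uneq Hj Hm Hjm); rewrite HuH.
Qed.

Lemma cut_T m : m <= k -> forall a b, e a b -> a \notin T m -> b \in T m -> b = u m.
Proof.
move=> Hm a b Hab Ha Hb.
have Hba : e b a by rewrite edge_sym.
exact: (T_cut (@edge_sym _ s) HH (HuH Hm) Hb Hba Ha).
Qed.

Lemma F_out j x : 0 < j < k -> x \notin T j -> d j.-1 x < d j x \/ d j.+1 x < d j x.
Proof.
move=> Hj Hx; have Hjk : j <= k by case/andP: Hj => _ /ltnW.
rewrite !(dist_sym Hconn (@edge_sym _ s) _ x).
move Hm : (dist e x (u j)) => m; case: m Hm => [|m] Hm.
  by move: Hx; rewrite -(dist0 Hconn Hm) T_in_h.
have [w [Hwu Hw]] := dist_pred Hconn Hm.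
case: (boolP (w \in H)) => HwH.
  have := nbr Hj (_ : e (u j) w) HwH; rewrite edge_sym Hwu => /(_ isT).
  by case=> <-; [left|right]; rewrite Hw.
have HwT : w \in T j by apply: (T_step (T_in_h _ _ _) (_ : e (u j) w)); [rewrite edge_sym | left].
have := cut_dist Hconn (cut_T Hjk) Hx HwT.
rewrite Hm Hw; lia.
Qed.

Lemma F_in m j x : m <= k -> j <= k -> j != m -> x \in T m -> d j (u m) + d m x <= d j x.
Proof.
move=> Hm Hj Hjm Hx.
exact: (cut_dist Hconn (cut_T Hm) (uT Hm Hj Hjm) Hx).
Qed.


Lemma U i j : i <= 5 -> j <= 5 -> i != j -> u i != u j.
Proof. by move=> Hi Hj; apply: uneq; apply: leq_trans Hk. Qed.
Arguments U : clear implicits.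

Lemma nbr_ne j a : 0 < j < 5 -> a <= 5 -> a != j.-1 -> a != j.+1 -> ~~ e (u j) (u a).
Proof.
move=> Hj Ha H1 H2; apply/negP => He.
have Hj' : 0 < j < k by case/andP: Hj => -> /= Hj5; exact: leq_trans Hj5 Hk.
have Hj5 : j < 5 by case/andP: Hj.
have [] := nbr Hj' He (HuH (leq_trans Ha Hk)) => /eqP.
  by rewrite (negbTE (U a j.-1 Ha (leq_trans (leq_pred _) (ltnW Hj5)) H1)).
by rewrite (negbTE (U a j.+1 Ha Hj5 H2)).
Qed.

Lemma girth3 : 3 <= d 0 (u 5).
Proof.
have E i : i < 5 -> e (u i) (u i.+1) by move=> Hi; apply: e_next; apply: leq_trans Hk.
move Hm : (d 0 (u 5)) => m; case: m Hm => [|[|[|m]]] Hm //.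
- by have := U 0 5 isT isT isT; rewrite (dist0 Hconn Hm) eqxx.
- have [w [Hw Hw0]] := dist_pred Hconn Hm; move: Hw; rewrite -(dist0 Hconn Hw0) => H05.
  case: (Hg (L := 6) isT); exists [:: u 0; u 1; u 2; u 3; u 4; u 5]; split => //.
    by rewrite /= !inE !negb_or ?(U 0 1 isT isT isT) ?(U 0 2 isT isT isT) ?(U 0 3 isT isT isT) ?(U 0 4 isT isT isT) ?(U 0 5 isT isT isT) ?(U 1 2 isT isT isT) ?(U 1 3 isT isT isT) ?(U 1 4 isT isT isT) ?(U 1 5 isT isT isT) ?(U 2 3 isT isT isT) ?(U 2 4 isT isT isT) ?(U 2 5 isT isT isT) ?(U 3 4 isT isT isT) ?(U 3 5 isT isT isT) ?(U 4 5 isT isT isT).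
  by rewrite /= (E 0) ?(E 1) ?(E 2) ?(E 3) ?(E 4) // edge_sym H05.
- have [w [Hw Hw1]] := dist_pred Hconn Hm.
  have [w' [Hw' Hw0]] := dist_pred Hconn Hw1.
  move: Hw'; rewrite -(dist0 Hconn Hw0) => H0w.
  have Hw0' : w != u 0 by apply/eqP => Hw0e; move: Hw1; rewrite Hw0e distuu.
  have Hw5 : w != u 5 by apply/eqP => Hw5e; move: Hm; rewrite -Hw5e Hw1.
  have Hw1' : w != u 1.
    apply/eqP => Hwe; move: Hw; rewrite Hwe; apply/negP; exact: (nbr_ne (j := 1)).
  have Hw2 : w != u 2.
    apply/eqP => Hwe; move: H0w; rewrite Hwe edge_sym; apply/negP; exact: (nbr_ne (j := 2) (a := 0)).
  have Hw3 : w != u 3.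
    apply/eqP => Hwe; move: H0w; rewrite Hwe edge_sym; apply/negP; exact: (nbr_ne (j := 3) (a := 0)).
  have Hw4 : w != u 4.
    apply/eqP => Hwe; move: H0w; rewrite Hwe edge_sym; apply/negP; exact: (nbr_ne (j := 4) (a := 0)).
  case: (Hg (L := 7) isT); exists [:: u 0; u 1; u 2; u 3; u 4; u 5; w]; split => //.
    rewrite /= !inE !negb_or; rewrite ?(U 0 1 isT isT isT) ?(U 0 2 isT isT isT) ?(U 0 3 isT isT isT) ?(U 0 4 isT isT isT) ?(U 0 5 isT isT isT) ?(U 1 2 isT isT isT) ?(U 1 3 isT isT isT) ?(U 1 4 isT isT isT) ?(U 1 5 isT isT isT) ?(U 2 3 isT isT isT) ?(U 2 4 isT isT isT) ?(U 2 5 isT isT isT) ?(U 3 4 isT isT isT) ?(U 3 5 isT isT isT) ?(U 4 5 isT isT isT); by rewrite ![_ == w]eq_sym Hw0' Hw1' Hw2 Hw3 Hw4 Hw5.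
  by rewrite /= (E 0) ?(E 1) ?(E 2) ?(E 3) ?(E 4) // edge_sym Hw edge_sym H0w.
Qed.

Lemma Lp j x : j < 5 -> d j x <= (d j.+1 x).+1 /\ d j.+1 x <= (d j x).+1.
Proof. by move=> Hj; apply: lip; apply: leq_trans Hj Hk. Qed.

Lemma Fo j x : 0 < j < 5 -> x \notin T j -> d j.-1 x < d j x \/ d j.+1 x < d j x.
Proof. by move=> /andP[Hj0 Hj5]; apply: F_out; rewrite Hj0 (leq_trans Hj5 Hk). Qed.

Lemma uT5 m j : m <= 5 -> j <= 5 -> j != m -> u j \notin T m.
Proof. by move=> Hm Hj; apply: uT; apply: leq_trans Hk. Qed.

Lemma dpos i j : i <= 5 -> j <= 5 -> i != j -> 0 < d i (u j).
Proof.
move=> Hi Hj Hij; rewrite lt0n; apply/negP => /eqP /(dist0 Hconn) /eqP.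
by rewrite (negbTE (U i j Hi Hj Hij)).
Qed.

Ltac lips x :=
  have := @Lp 0 x isT; have := @Lp 1 x isT;
  have := @Lp 2 x isT; have := @Lp 3 x isT;
  have := @Lp 4 x isT.

Lemma prof0 : [/\ d 1 (u 0) = 1, d 2 (u 0) = 2, d 3 (u 0) = 3 & d 4 (u 0) = 4].
Proof.
have := girth3; rewrite (dist_sym Hconn (@edge_sym _ s)) => G.
have := distuu Hconn (u 0) => D0.
lips (u 0).
have := @Fo 1 (u 0) isT (@uT5 1 0 isT isT isT).
have := @Fo 2 (u 0) isT (@uT5 2 0 isT isT isT).
have := @Fo 3 (u 0) isT (@uT5 3 0 isT isT isT).
have := @Fo 4 (u 0) isT (@uT5 4 0 isT isT isT).
rewrite /=; intros; split; lia.
Qed.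

Lemma prof5 : [/\ d 1 (u 5) = 4, d 2 (u 5) = 3, d 3 (u 5) = 2 & d 4 (u 5) = 1].
Proof.
have := girth3 => G.
have := distuu Hconn (u 5) => D0.
lips (u 5).
have := @Fo 1 (u 5) isT (@uT5 1 5 isT isT isT).
have := @Fo 2 (u 5) isT (@uT5 2 5 isT isT isT).
have := @Fo 3 (u 5) isT (@uT5 3 5 isT isT isT).
have := @Fo 4 (u 5) isT (@uT5 4 5 isT isT isT).
rewrite /=; intros; split; lia.
Qed.

Lemma prof1 j : j <= 5 -> d j (u 1) = (1 - j) + (j - 1).
Proof.
move=> Hj; have [P1 P2 P3 P4] := prof0; have [Q1 Q2 Q3 Q4] := prof5.
have S0 : d 0 (u 1) = d 1 (u 0) by rewrite (dist_sym Hconn (@edge_sym _ s)).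
have S5 : d 5 (u 1) = d 1 (u 5) by rewrite (dist_sym Hconn (@edge_sym _ s)).
have := distuu Hconn (u 1) => D0.
lips (u 1).
  have := @Fo 2 (u 1) isT (@uT5 2 1 isT isT isT).
  have := @Fo 3 (u 1) isT (@uT5 3 1 isT isT isT).
  have := @Fo 4 (u 1) isT (@uT5 4 1 isT isT isT).
  have := @dpos 0 1 isT isT isT.
  have := @dpos 2 1 isT isT isT.
  have := @dpos 3 1 isT isT isT.
  have := @dpos 4 1 isT isT isT.
  have := @dpos 5 1 isT isT isT.
rewrite /=; intros; case: j Hj => [|[|[|[|[|[|j]]]]]] //= _; lia.
Qed.

Lemma prof2 j : j <= 5 -> d j (u 2) = (2 - j) + (j - 2).
Proof.
move=> Hj; have [P1 P2 P3 P4] := prof0; have [Q1 Q2 Q3 Q4] := prof5.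
have S0 : d 0 (u 2) = d 2 (u 0) by rewrite (dist_sym Hconn (@edge_sym _ s)).
have S5 : d 5 (u 2) = d 2 (u 5) by rewrite (dist_sym Hconn (@edge_sym _ s)).
have := distuu Hconn (u 2) => D0.
lips (u 2).
  have := @Fo 1 (u 2) isT (@uT5 1 2 isT isT isT).
  have := @Fo 3 (u 2) isT (@uT5 3 2 isT isT isT).
  have := @Fo 4 (u 2) isT (@uT5 4 2 isT isT isT).
  have := @dpos 0 2 isT isT isT.
  have := @dpos 1 2 isT isT isT.
  have := @dpos 3 2 isT isT isT.
  have := @dpos 4 2 isT isT isT.
  have := @dpos 5 2 isT isT isT.
rewrite /=; intros; case: j Hj => [|[|[|[|[|[|j]]]]]] //= _; lia.
Qed.

Lemma prof3 j : j <= 5 -> d j (u 3) = (3 - j) + (j - 3).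
Proof.
move=> Hj; have [P1 P2 P3 P4] := prof0; have [Q1 Q2 Q3 Q4] := prof5.
have S0 : d 0 (u 3) = d 3 (u 0) by rewrite (dist_sym Hconn (@edge_sym _ s)).
have S5 : d 5 (u 3) = d 3 (u 5) by rewrite (dist_sym Hconn (@edge_sym _ s)).
have := distuu Hconn (u 3) => D0.
lips (u 3).
  have := @Fo 1 (u 3) isT (@uT5 1 3 isT isT isT).
  have := @Fo 2 (u 3) isT (@uT5 2 3 isT isT isT).
  have := @Fo 4 (u 3) isT (@uT5 4 3 isT isT isT).
  have := @dpos 0 3 isT isT isT.
  have := @dpos 1 3 isT isT isT.
  have := @dpos 2 3 isT isT isT.
  have := @dpos 4 3 isT isT isT.
  have := @dpos 5 3 isT isT isT.
rewrite /=; intros; case: j Hj => [|[|[|[|[|[|j]]]]]] //= _; lia.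
Qed.

Lemma prof4 j : j <= 5 -> d j (u 4) = (4 - j) + (j - 4).
Proof.
move=> Hj; have [P1 P2 P3 P4] := prof0; have [Q1 Q2 Q3 Q4] := prof5.
have S0 : d 0 (u 4) = d 4 (u 0) by rewrite (dist_sym Hconn (@edge_sym _ s)).
have S5 : d 5 (u 4) = d 4 (u 5) by rewrite (dist_sym Hconn (@edge_sym _ s)).
have := distuu Hconn (u 4) => D0.
lips (u 4).
  have := @Fo 1 (u 4) isT (@uT5 1 4 isT isT isT).
  have := @Fo 2 (u 4) isT (@uT5 2 4 isT isT isT).
  have := @Fo 3 (u 4) isT (@uT5 3 4 isT isT isT).
  have := @dpos 0 4 isT isT isT.
  have := @dpos 1 4 isT isT isT.
  have := @dpos 2 4 isT isT isT.
  have := @dpos 3 4 isT isT isT.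
  have := @dpos 5 4 isT isT isT.
rewrite /=; intros; case: j Hj => [|[|[|[|[|[|j]]]]]] //= _; lia.
Qed.

Definition ti i := u i.+2 |: (s (u i) :\ u i.+1).
Local Notation e' i := (edge (upd s (u i) (ti i))).

Lemma E1 i a b : e a b -> ~~ ((a == u i) && (b == u i.+1) || (a == u i.+1) && (b == u i)) -> e' i a b.
Proof.
move=> /orP [Hab|Hba] Hn; rewrite /edge !ffunE; apply/orP; [left|right].
  case: ifP => // /eqP Ha; subst a; rewrite !inE Hab andbT; apply/orP; right.
  by apply/negP => /eqP Hb; subst b; move: Hn; rewrite !eqxx.
case: ifP => // /eqP Hb; subst b; rewrite !inE Hba andbT; apply/orP; right.
by apply/negP => /eqP Ha; subst a; move: Hn; rewrite !eqxx orbT.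
Qed.

Lemma E2 i : e' i (u i) (u i.+2).
Proof. by rewrite /edge ffunE eqxx !inE eqxx. Qed.

Lemma excl i a b : i < 4 -> a <= 5 -> b <= 5 -> a != i -> a != i.+1 ->
  ~~ ((u a == u i) && (u b == u i.+1) || (u a == u i.+1) && (u b == u i)).
Proof.
move=> Hi Ha Hb H1 H2.
have Hi5 : i <= 5 by apply: leq_trans (ltnW Hi) _.
have Hi5' : i.+1 <= 5 by apply: leq_trans Hi _.
by rewrite (negbTE (U a i Ha Hi5 H1)) (negbTE (U a i.+1 Ha Hi5' H2)).
Qed.

Lemma conn' i : i < 4 -> conn (e' i).
Proof.
move=> Hi a b; apply: (connect_sub _ (Hconn a b)) => x y Hxy.
case: (boolP ((x == u i) && (y == u i.+1) || (x == u i.+1) && (y == u i))) => Hc; last first.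
  by apply: connect1; apply: E1.
have Hi2 : i.+2 <= 5 by lia.
have Hi2' : i.+1 < k by lia.
have F : e' i (u i.+2) (u i.+1).
  apply: E1; first by apply: e_prev.
  by apply: excl => //; lia.
case/orP: Hc => /andP[/eqP -> /eqP ->].
  exact: (connect_trans (connect1 (E2 i)) (connect1 F)).
apply: (@connect_trans _ _ (u i.+2)); apply: connect1.
  by rewrite edge_sym.
by rewrite edge_sym E2.
Qed.

Lemma d_adj i : i < 5 -> d i (u i.+1) <= 1 /\ d i.+1 (u i) <= 1.
Proof.
move=> Hi; have Hik : i < k by lia.
split.
  by have := dist_edge Hconn (u i) (e_next Hik); rewrite distuu.
by have := dist_edge Hconn (u i.+1) (e_prev Hik); rewrite distuu.
Qed.

Lemma B1 i x : i < 4 -> d i x <= d i.+1 x -> dist (e' i) (u i) x <= d i x.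
Proof.
move=> Hi Hx.
apply: (@sim _ e (e' i) Hconn (u i) (fun y => d i.+1 y) 0); last by rewrite addn0.
  by move=> w y Hwy; apply: dist_edge.
move=> w y Hwy Hd Hg'; apply: E1 => //.
apply/negP => /orP [] /andP [/eqP Hw /eqP Hy]; subst w y.
  move: Hg'; rewrite distuu // addn0 leqn0 => /eqP /(dist0 Hconn) /eqP.
  by rewrite (negbTE (U i i.+1 _ _ _)) //; lia.
by move: Hd; rewrite distuu.
Qed.

Lemma B2 i x : i < 4 -> d i.+2 x <= d i.+1 x -> dist (e' i) (u i) x <= (d i.+2 x).+1.
Proof.
move=> Hi Hx.
have H2 : dist (e' i) (u i.+2) x <= d i.+2 x.
  apply: (@sim _ e (e' i) Hconn (u i.+2) (fun y => d i.+1 y) 0); last by rewrite addn0.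
    by move=> w y Hwy; apply: dist_edge.
  move=> w y Hwy Hd Hg'; apply: E1 => //.
  apply/negP => /orP [] /andP [/eqP Hw /eqP Hy]; subst w y.
    move: Hg'; rewrite distuu // addn0 leqn0 => /eqP /(dist0 Hconn) /eqP.
    by rewrite (negbTE (U i.+2 i.+1 _ _ _)) //; lia.
  have Hi5 : i < 5 by lia.
  have [_ A1] := d_adj Hi5.
  have P1 : 0 < d i.+2 (u i.+1) by apply: dpos; lia.
  lia.
have Hc := conn' Hi.
apply: leq_trans (dist_tri Hc (u i) (u i.+2) x) _.
have := dist_edge Hc (u i) (E2 i); rewrite (distuu Hc).
lia.
Qed.

Lemma B3 i x : i < 4 -> d i.+1 x < d i x -> dist (e' i) (u i) x <= (d i.+1 x).+2.
Proof.
move=> Hi Hx.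
have H2 : dist (e' i) (u i.+1) x <= d i.+1 x.
  apply: (@sim _ e (e' i) Hconn (u i.+1) (fun y => d i y) 1); last by rewrite addn1.
    by move=> w y Hwy; apply: dist_edge.
  move=> w y Hwy Hd Hg'; apply: E1 => //.
  apply/negP => /orP [] /andP [/eqP Hw /eqP Hy]; subst w y.
    by move: Hd; rewrite distuu.
  by move: Hg'; rewrite distuu //; lia.
have Hc := conn' Hi.
have F : e' i (u i.+2) (u i.+1).
  apply: E1; first by apply: e_prev; lia.
  by apply: excl => //; lia.
apply: leq_trans (dist_tri Hc (u i) (u i.+2) x) _.
have := dist_edge Hc (u i) (E2 i); rewrite (distuu Hc).
have := dist_tri Hc (u i.+2) (u i.+1) x.
have := dist_edge Hc (u i.+2) F; rewrite (distuu Hc).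
lia.
Qed.

Lemma Tf1 x : x \in T 1 -> 1 + d 1 x <= d 0 x /\ 1 + d 1 x <= d 2 x /\ 2 + d 1 x <= d 3 x /\ 3 + d 1 x <= d 4 x /\ 4 + d 1 x <= d 5 x.
Proof.
move=> Hx.
have := @F_in 1 0 x (leq_trans (isT : 1 <= 5) Hk) (leq_trans (isT : 0 <= 5) Hk) isT Hx; rewrite (prof1 (isT : 0 <= 5)).
have := @F_in 1 2 x (leq_trans (isT : 1 <= 5) Hk) (leq_trans (isT : 2 <= 5) Hk) isT Hx; rewrite (prof1 (isT : 2 <= 5)).
have := @F_in 1 3 x (leq_trans (isT : 1 <= 5) Hk) (leq_trans (isT : 3 <= 5) Hk) isT Hx; rewrite (prof1 (isT : 3 <= 5)).
have := @F_in 1 4 x (leq_trans (isT : 1 <= 5) Hk) (leq_trans (isT : 4 <= 5) Hk) isT Hx; rewrite (prof1 (isT : 4 <= 5)).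
have := @F_in 1 5 x (leq_trans (isT : 1 <= 5) Hk) (leq_trans (isT : 5 <= 5) Hk) isT Hx; rewrite (prof1 (isT : 5 <= 5)).
rewrite /=; intros; lia.
Qed.

Lemma Tf2 x : x \in T 2 -> 2 + d 2 x <= d 0 x /\ 1 + d 2 x <= d 1 x /\ 1 + d 2 x <= d 3 x /\ 2 + d 2 x <= d 4 x /\ 3 + d 2 x <= d 5 x.
Proof.
move=> Hx.
have := @F_in 2 0 x (leq_trans (isT : 2 <= 5) Hk) (leq_trans (isT : 0 <= 5) Hk) isT Hx; rewrite (prof2 (isT : 0 <= 5)).
have := @F_in 2 1 x (leq_trans (isT : 2 <= 5) Hk) (leq_trans (isT : 1 <= 5) Hk) isT Hx; rewrite (prof2 (isT : 1 <= 5)).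
have := @F_in 2 3 x (leq_trans (isT : 2 <= 5) Hk) (leq_trans (isT : 3 <= 5) Hk) isT Hx; rewrite (prof2 (isT : 3 <= 5)).
have := @F_in 2 4 x (leq_trans (isT : 2 <= 5) Hk) (leq_trans (isT : 4 <= 5) Hk) isT Hx; rewrite (prof2 (isT : 4 <= 5)).
have := @F_in 2 5 x (leq_trans (isT : 2 <= 5) Hk) (leq_trans (isT : 5 <= 5) Hk) isT Hx; rewrite (prof2 (isT : 5 <= 5)).
rewrite /=; intros; lia.
Qed.

Lemma Tf3 x : x \in T 3 -> 3 + d 3 x <= d 0 x /\ 2 + d 3 x <= d 1 x /\ 1 + d 3 x <= d 2 x /\ 1 + d 3 x <= d 4 x /\ 2 + d 3 x <= d 5 x.
Proof.
move=> Hx.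
have := @F_in 3 0 x (leq_trans (isT : 3 <= 5) Hk) (leq_trans (isT : 0 <= 5) Hk) isT Hx; rewrite (prof3 (isT : 0 <= 5)).
have := @F_in 3 1 x (leq_trans (isT : 3 <= 5) Hk) (leq_trans (isT : 1 <= 5) Hk) isT Hx; rewrite (prof3 (isT : 1 <= 5)).
have := @F_in 3 2 x (leq_trans (isT : 3 <= 5) Hk) (leq_trans (isT : 2 <= 5) Hk) isT Hx; rewrite (prof3 (isT : 2 <= 5)).
have := @F_in 3 4 x (leq_trans (isT : 3 <= 5) Hk) (leq_trans (isT : 4 <= 5) Hk) isT Hx; rewrite (prof3 (isT : 4 <= 5)).
have := @F_in 3 5 x (leq_trans (isT : 3 <= 5) Hk) (leq_trans (isT : 5 <= 5) Hk) isT Hx; rewrite (prof3 (isT : 5 <= 5)).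
rewrite /=; intros; lia.
Qed.

Lemma Tf4 x : x \in T 4 -> 4 + d 4 x <= d 0 x /\ 3 + d 4 x <= d 1 x /\ 2 + d 4 x <= d 2 x /\ 1 + d 4 x <= d 3 x /\ 1 + d 4 x <= d 5 x.
Proof.
move=> Hx.
have := @F_in 4 0 x (leq_trans (isT : 4 <= 5) Hk) (leq_trans (isT : 0 <= 5) Hk) isT Hx; rewrite (prof4 (isT : 0 <= 5)).
have := @F_in 4 1 x (leq_trans (isT : 4 <= 5) Hk) (leq_trans (isT : 1 <= 5) Hk) isT Hx; rewrite (prof4 (isT : 1 <= 5)).
have := @F_in 4 2 x (leq_trans (isT : 4 <= 5) Hk) (leq_trans (isT : 2 <= 5) Hk) isT Hx; rewrite (prof4 (isT : 2 <= 5)).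
have := @F_in 4 3 x (leq_trans (isT : 4 <= 5) Hk) (leq_trans (isT : 3 <= 5) Hk) isT Hx; rewrite (prof4 (isT : 3 <= 5)).
have := @F_in 4 5 x (leq_trans (isT : 4 <= 5) Hk) (leq_trans (isT : 5 <= 5) Hk) isT Hx; rewrite (prof4 (isT : 5 <= 5)).
rewrite /=; intros; lia.
Qed.

Variable R : realFieldType.
Variable alpha : R.
Hypothesis Hnash : nash alpha s.

Lemma notin2 i : i < 4 -> u i.+2 \notin s (u i).
Proof.
move=> Hi; apply/negP => Hin.
case: (posnP i) => [Hi0|Hi0].
  subst i; have H2 : 0 < 2 < k by lia.
  have [Hin' _] := Hdeg H2.
  have : u 0 = u 1.
    apply: (card1_eq Hin'); rewrite inE ?Hin ?HuH //; try lia.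
    by rewrite Hbuy //; lia.
  by move/eqP; rewrite (negbTE (U 0 1 isT isT isT)).
have H2 : 0 < i < k by lia.
have [_ Hout] := Hdeg H2.
have : u i.+1 = u i.+2.
  apply: (card1_eq Hout); rewrite inE ?Hin ?HuH ?Hbuy //; lia.
by move/eqP; rewrite (negbTE (U i.+1 i.+2 _ _ _)) //; lia.
Qed.

Lemma dev i : i < 4 -> Dsum e (u i) <= Dsum (e' i) (u i).
Proof.
move=> Hi; case: Hnash => Hirr Hn.
have Hnot : u i \notin ti i.
  rewrite !inE (negbTE (Hirr _)) andbF orbF.
  by apply: U => //; lia.
have Hra : reaches_all (e' i) (u i) by apply/forallP => v; exact: conn' Hi _ _.
have [_ Hc] := Hn _ _ Hnot Hra.
move: Hc; rewrite /cost ffunE eqxx.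
have -> : #|ti i| = #|s (u i)|.
  rewrite /ti cardsU1 (cardsD1 (u i.+1) (s (u i))) Hbuy; last by lia.
  by rewrite !inE (negbTE (notin2 Hi)) andbF.
by rewrite lerD2l ler_nat.
Qed.

Lemma pvx x :
  dist (e' 0) (u 0) x + dist (e' 0) (u 0) x + dist (e' 1) (u 1) x + dist (e' 1) (u 1) x +
  dist (e' 2) (u 2) x + dist (e' 2) (u 2) x + dist (e' 3) (u 3) x + dist (e' 3) (u 3) x + d 0 x + 2 <=
  d 5 x + d 0 x + d 0 x + d 1 x + d 1 x + d 2 x + d 2 x + d 3 x + d 3 x
  + (x \in T 1) + (x \in T 2) + (x \in T 3) + (x \in T 4).
Proof.
have [L0 L0'] := @Lp 0 x isT. have [L1 L1'] := @Lp 1 x isT.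
have [L2 L2'] := @Lp 2 x isT. have [L3 L3'] := @Lp 3 x isT.
have [L4 L4'] := @Lp 4 x isT.
apply: (pv (a4 := d 4 x)) => //.
- exact: (@B1 0 x isT).
- exact: (@B2 0 x isT).
- exact: (@B3 0 x isT).
- exact: (@B1 1 x isT).
- exact: (@B2 1 x isT).
- exact: (@B3 1 x isT).
- exact: (@B1 2 x isT).
- exact: (@B2 2 x isT).
- exact: (@B3 2 x isT).
- exact: (@B1 3 x isT).
- exact: (@B2 3 x isT).
- exact: (@B3 3 x isT).
- by move/Tf1; lia.
- by move/Tf2; lia.
- by move/Tf3; lia.
- by move/Tf4; lia.
- exact: (@Fo 1 x isT).
- exact: (@Fo 2 x isT).
- exact: (@Fo 3 x isT).
- exact: (@Fo 4 x isT).
Qed.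

Lemma main_ineq : Dsum e (u 0) + 2 * #|V| <= Dsum e (u 5) + (#|T 1| + #|T 2| + #|T 3| + #|T 4|).
Proof.
have S := @leq_sum _ (index_enum V) xpredT _ _ (fun x _ => pvx x).
rewrite !big_split /= in S.
rewrite sum_const_V !sum_in in S.
rewrite -!(DsumE _ Hconn) in S.
rewrite -!(DsumE _ (conn' (isT : 0 < 4))) -!(DsumE _ (conn' (isT : 1 < 4))) in S.
rewrite -!(DsumE _ (conn' (isT : 2 < 4))) -!(DsumE _ (conn' (isT : 3 < 4))) in S.
have D0 := @dev 0 isT; have D1 := @dev 1 isT; have D2 := @dev 2 isT; have D3 := @dev 3 isT.
lia.
Qed.

End Main.

Theorem proposition5 (R : realFieldType) (alpha : R) (n : nat)
    (s : profile 'I_n) (H : {set 'I_n}) (k : nat) (u : nat -> 'I_n) :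
  (0 < alpha)%R ->
  nash alpha s ->
  two_ecc (edge s) H -> 3 <= #|H| ->
  girth_gt (edge s) 14 ->
  5 <= k ->
  (forall i j, i <= k -> j <= k -> u i = u j -> i = j) ->
  (forall i, i <= k -> u i \in H) ->
  (forall i, i < k -> u i.+1 \in s (u i)) ->
  (forall i, 0 < i < k ->
     indegH s H (u i) = 1 /\ outdegH s H (u i) = 1) ->
  ((Dsum (edge s) (u 5%N))%:Z - (Dsum (edge s) (u 0%N))%:Z >=
   (2 * n)%:Z - (\sum_(1 <= i < 5) #|Tset (edge s) H (u i)|)%:Z)%R.
Proof.
move=> Ha Hn HH HH3 Hg Hk Hinj HuH Hbuy Hdeg.
have Hconn : conn (edge s).
  move=> a b; case: (Hn) => Hirr Hn'.
  have Hnot : a \notin [set w | w != a] by rewrite inE eqxx.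
  have Hra : reaches_all (edge (upd s a [set w | w != a])) a.
    apply/forallP => v; case: (eqVneq v a) => [->|Hva]; first exact: connect0.
    by apply: connect1; rewrite /edge ffunE eqxx inE Hva.
  have [H1 _] := Hn' a _ Hnot Hra.
  by move/forallP: H1.
have M := main_ineq Hconn HH Hg Hk Hinj HuH Hbuy Hdeg Hn.
rewrite card_ord in M.
have -> : \sum_(1 <= i < 5) #|Tset (edge s) H (u i)| =
  #|Tset (edge s) H (u 1)| + #|Tset (edge s) H (u 2)| + #|Tset (edge s) H (u 3)| + #|Tset (edge s) H (u 4)|.
  rewrite big_nat_recl // big_nat_recl // big_nat_recl // big_nat_recl // big_geq //; lia.
lia.
Qed.
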